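(* Let $(X,d)$ be a bicomplete quasi-pseudometric space. Let $J:X\to X$ be a continuous single-valued map such that $r\,d(x,y)\le d(Jx,Jy)$ for all $x,y\in X$, for some constant $r>0$. Let $F:X\to CB(X)$ be a set-valued map such that $$H(Fx,Fy)\le \alpha\big[d(Jx,Fx)+d(Jy,Fy)\big]\quad\text{for all }x,y\in X,$$ where $\alpha\in(0,1/2)$. Then there exists a unique $x_0\in X$ which is both a startpoint and an endpoint of $J$ and $F$ if and only if $J$ and $F$ have the approximate mix-point property.
   Context: A quasi-pseudometric on a nonempty set $X$ is a map $d:X\times X\to[0,\infty)$ with $d(x,x)=0$ and $d(x,z)\le d(x,y)+d(y,z)$ for all $x,y,z$; it is $T_0$ if $d(x,y)=0=d(y,x)$ implies $x=y$. Write $d^s(x,y)=\max\{d(x,y),d(y,x)\}$. The space $(X,d)$ is bicomplete if $d$ is $T_0$ and the metric $d^s$ is complete. For $x\in X$ and nonempty $A\subseteq X$: $d(x,A)=\inf_{a\in A}d(x,a)$, $d(A,x)=\inf_{a\in A}d(a,x)$. For nonempty $A,B\subseteq X$: $H(A,B)=\max\{\sup_{a\in A}d(a,B),\ \sup_{b\in B}d(A,b)\}$. $CB(X)$ denotes the family of nonempty $d^s$-bounded, $\tau(d^s)$-closed subsets of $X$; continuity of $J$ is with respect to $\tau(d^s)$. For $J:X\to X$ and $F:X\to 2^X$, a point $x$ is a startpoint of $J$ and $F$ if $H(\{Jx\},Fx)=0$ and an endpoint of $J$ and $F$ if $H(Fx,\{Jx\})=0$. $J$ and $F$ have the approximate mix-point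 property if $\inf_{x\in X}\sup_{y\in Fx}d^s(Jx,y)=0$. *)

(* Defs.v *)
From Stdlib Require Import Reals Lra Classical ClassicalEpsilon.
Open Scope R_scope.

Section QPM.
Context {X : Type}.

Definition quasi_pseudometric (d : X -> X -> R) : Prop :=
  (forall x y, 0 <= d x y) /\ (forall x, d x x = 0) /\
  (forall x y z, d x z <= d x y + d y z).

Definition T0 (d : X -> X -> R) : Prop :=
  forall x y, d x y = 0 -> d y x = 0 -> x = y.

Definition ds (d : X -> X -> R) (x y : X) : R := Rmax (d x y) (d y x).

Definition ds_cauchy (d : X -> X -> R) (u : nat -> X) : Prop :=
  forall eps, eps > 0 -> exists N, forall m n, (m >= N)%nat -> (n >= N)%nat ->
    ds d (u m) (u n) < eps.

Definition ds_converges (d : X -> X -> R) (u : nat -> X) (l : X) : Prop :=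
  forall eps, eps > 0 -> exists N, forall n, (n >= N)%nat -> ds d (u n) l < eps.

Definition bicomplete (d : X -> X -> R) : Prop :=
  T0 d /\ forall u, ds_cauchy d u -> exists l, ds_converges d u l.

Definition ds_continuous (d : X -> X -> R) (J : X -> X) : Prop :=
  forall x eps, eps > 0 -> exists delta, delta > 0 /\
    forall y, ds d x y < delta -> ds d (J x) (J y) < eps.

Definition ds_bounded (d : X -> X -> R) (A : X -> Prop) : Prop :=
  exists M, forall a b, A a -> A b -> ds d a b <= M.

Definition ds_closed (d : X -> X -> R) (A : X -> Prop) : Prop :=
  forall x, (forall eps, eps > 0 -> exists a, A a /\ ds d x a < eps) -> A x.

Definition CB (d : X -> X -> R) (A : X -> Prop) : Prop :=
  (exists a, A a) /\ ds_bounded d A /\ ds_closed d A.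

End QPM.

(* infimum / supremum of a set of reals (value 0 if it does not exist) *)
Definition is_lower_bound (S : R -> Prop) (m : R) : Prop := forall x, S x -> m <= x.
Definition is_glb (S : R -> Prop) (m : R) : Prop :=
  is_lower_bound S m /\ forall b, is_lower_bound S b -> b <= m.

Definition Rinf (S : R -> Prop) : R :=
  match excluded_middle_informative (exists m, is_glb S m) with
  | left h => proj1_sig (constructive_indefinite_description _ h)
  | right _ => 0
  end.

Definition Rsup (S : R -> Prop) : R :=
  match excluded_middle_informative (exists m, is_lub S m) with
  | left h => proj1_sig (constructive_indefinite_description _ h)
  | right _ => 0
  end.

Section Haus.
Context {X : Type} (d : X -> X -> R).

Definition dpt_set (x : X) (A : X -> Prop) : R :=
  Rinf (fun r => exists a, A a /\ r = d x a).
Definition dset_pt (A : X -> Prop) (x : X) : R :=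
  Rinf (fun r => exists a, A a /\ r = d a x).

Definition H (A B : X -> Prop) : R :=
  Rmax (Rsup (fun r => exists a, A a /\ r = dpt_set a B))
       (Rsup (fun r => exists b, B b /\ r = dset_pt A b)).

Definition singleton (y : X) : X -> Prop := fun z => z = y.

Definition startpoint (J : X -> X) (F : X -> X -> Prop) (x : X) : Prop :=
  H (singleton (J x)) (F x) = 0.

Definition endpoint (J : X -> X) (F : X -> X -> Prop) (x : X) : Prop :=
  H (F x) (singleton (J x)) = 0.

Definition approx_mix_point (J : X -> X) (F : X -> X -> Prop) : Prop :=
  Rinf (fun r => exists x, r = Rsup (fun s => exists y, F x y /\ s = ds d (J x) y)) = 0.
End Haus.

(* Main.v *)
Require Import Defs.
From Stdlib Require Import Reals Lra Lia Classical ClassicalEpsilon.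
Open Scope R_scope.

Lemma Rsup_spec (S : R -> Prop) :
  (exists x, S x) -> (exists M, forall x, S x -> x <= M) -> is_lub S (Rsup S).
Proof.
  intros Hne Hb. unfold Rsup.
  destruct (excluded_middle_informative _) as [h|h].
  - exact (proj2_sig (constructive_indefinite_description _ h)).
  - exfalso; apply h. destruct Hb as [M HM].
    destruct (completeness S) as [m Hm]; [exists M; exact HM | exact Hne |].
    exists m; exact Hm.
Qed.

Lemma Rsup_ub (S : R -> Prop) x :
  S x -> (exists M, forall x, S x -> x <= M) -> x <= Rsup S.
Proof. intros Hx Hb. destruct (Rsup_spec S (ex_intro _ x Hx) Hb) as [H1 _]. apply H1; auto. Qed.

Lemma Rsup_le (S : R -> Prop) c :
  (forall x, S x -> x <= c) -> 0 <= c -> Rsup S <= c.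
Proof.
  intros Hc H0. unfold Rsup.
  destruct (excluded_middle_informative _) as [h|h]; auto.
  destruct (proj2_sig (constructive_indefinite_description _ h)) as [_ Hm]. apply Hm. exact Hc.
Qed.

Lemma Rsup_ge0 (S : R -> Prop) : (exists x, S x /\ 0 <= x) -> 0 <= Rsup S.
Proof.
  intros [x [Hx H0]]. unfold Rsup.
  destruct (excluded_middle_informative _) as [h|h]; [|lra].
  destruct (proj2_sig (constructive_indefinite_description _ h)) as [Hm _].
  apply Rle_trans with x; auto.
Qed.

Lemma Rinf_spec (S : R -> Prop) :
  (exists x, S x) -> (exists m, is_lower_bound S m) -> is_glb S (Rinf S).
Proof.
  intros Hne Hb. unfold Rinf.
  destruct (excluded_middle_informative _) as [h|h].
  - exact (proj2_sig (constructive_indefinite_description _ h)).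
  - exfalso; apply h. destruct Hb as [m Hm]. destruct Hne as [x Hx].
    destruct (completeness (fun y => S (- y))) as [L [HL1 HL2]].
    + exists (- m). intros y Hy. specialize (Hm _ Hy). lra.
    + exists (- x). rewrite Ropp_involutive. exact Hx.
    + exists (- L). split.
      * intros z Hz. assert (- z <= L). { apply HL1. rewrite Ropp_involutive. exact Hz. } lra.
      * intros b Hbb. assert (L <= - b). { apply HL2. intros y Hy. specialize (Hbb _ Hy). lra. } lra.
Qed.

Lemma Rinf_lb (S : R -> Prop) x : S x -> (exists m, is_lower_bound S m) -> Rinf S <= x.
Proof. intros Hx Hb. destruct (Rinf_spec S (ex_intro _ x Hx) Hb) as [H1 _]. apply H1; auto. Qed.

Lemma Rinf_approx (S : R -> Prop) eps : (exists x, S x) -> (exists m, is_lower_bound S m) ->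
  eps > 0 -> exists x, S x /\ x < Rinf S + eps.
Proof.
  intros Hne Hb He. destruct (Rinf_spec S Hne Hb) as [H1 H2].
  destruct (classic (exists x, S x /\ x < Rinf S + eps)) as [h|h]; auto.
  exfalso. assert (Rinf S + eps <= Rinf S); [|lra].
  apply H2. intros x Hx. destruct (Rle_lt_dec (Rinf S + eps) x); auto.
  exfalso; apply h; eauto.
Qed.

Lemma ds_ge_l {X} (d : X -> X -> R) x y : d x y <= ds d x y.
Proof. unfold ds; apply Rmax_l. Qed.
Lemma ds_ge_r {X} (d : X -> X -> R) x y : d y x <= ds d x y.
Proof. unfold ds; apply Rmax_r. Qed.
Lemma ds_sym {X} (d : X -> X -> R) x y : ds d x y = ds d y x.
Proof. unfold ds; apply Rmax_comm. Qed.
Lemma ds_le {X} (d : X -> X -> R) x y c : d x y <= c -> d y x <= c -> ds d x y <= c.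
Proof. intros; unfold ds; apply Rmax_lub; auto. Qed.
Lemma ds_tri {X} (d : X -> X -> R) x y z : quasi_pseudometric d -> ds d x z <= ds d x y + ds d y z.
Proof.
  intros [H0 [H1 H2]]. apply ds_le.
  - pose proof (H2 x y z). pose proof (ds_ge_l d x y). pose proof (ds_ge_l d y z). lra.
  - pose proof (H2 z y x). pose proof (ds_ge_r d x y). pose proof (ds_ge_r d y z). lra.
Qed.

Section S.
End S.

Lemma lb0_pt {X} (d : X -> X -> R) x A : quasi_pseudometric d ->
  exists m, is_lower_bound (fun r => exists a, A a /\ r = d x a) m.
Proof. intros [H0 _]. exists 0. intros r [a [_ ->]]. apply H0. Qed.
Lemma lb0_sp {X} (d : X -> X -> R) x A : quasi_pseudometric d ->
  exists m, is_lower_bound (fun r => exists a, A a /\ r = d a x) m.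
Proof. intros [H0 _]. exists 0. intros r [a [_ ->]]. apply H0. Qed.

Lemma dpt_le {X} (d : X -> X -> R) x A a : quasi_pseudometric d -> A a -> dpt_set d x A <= d x a.
Proof. intros Hq Ha. unfold dpt_set. apply Rinf_lb; [eauto | apply lb0_pt; auto]. Qed.
Lemma dset_le {X} (d : X -> X -> R) x A a : quasi_pseudometric d -> A a -> dset_pt d A x <= d a x.
Proof. intros Hq Ha. unfold dset_pt. apply Rinf_lb; [eauto | apply lb0_sp; auto]. Qed.

Lemma dpt_ge0 {X} (d : X -> X -> R) x A : quasi_pseudometric d -> (exists a, A a) -> 0 <= dpt_set d x A.
Proof.
  intros Hq [a Ha]. unfold dpt_set.
  destruct (Rinf_spec (fun r => exists a, A a /\ r = d x a)) as [_ H2]; [exists (d x a); eauto | apply lb0_pt; auto |].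
  apply H2. intros r [b [_ ->]]. apply (proj1 Hq).
Qed.

Lemma dpt_approx {X} (d : X -> X -> R) x A eps : quasi_pseudometric d -> (exists a, A a) -> eps > 0 ->
  exists a, A a /\ d x a < dpt_set d x A + eps.
Proof.
  intros Hq [a Ha] He. unfold dpt_set.
  destruct (Rinf_approx (fun r => exists a, A a /\ r = d x a) eps) as [r [[b [Hb ->]] Hr]];
    [exists (d x a); eauto | apply lb0_pt; auto | auto |].
  eauto.
Qed.
Lemma dset_approx {X} (d : X -> X -> R) x A eps : quasi_pseudometric d -> (exists a, A a) -> eps > 0 ->
  exists a, A a /\ d a x < dset_pt d A x + eps.
Proof.
  intros Hq [a Ha] He. unfold dset_pt.
  destruct (Rinf_approx (fun r => exists a, A a /\ r = d a x) eps) as [r [[b [Hb ->]] Hr]];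
    [exists (d a x); eauto | apply lb0_sp; auto | auto |].
  eauto.
Qed.

Lemma H_ge1 {X} (d : X -> X -> R) A B a : quasi_pseudometric d ->
  (exists a, A a) -> ds_bounded d A -> (exists b, B b) -> ds_bounded d B ->
  A a -> dpt_set d a B <= H d A B.
Proof.
  intros Hq [a0 Ha0] [MA HMA] [b0 Hb0] [MB HMB] Ha. unfold H.
  eapply Rle_trans; [|apply Rmax_l].
  apply Rsup_ub; [eauto|]. exists (MA + d a0 b0). intros r [a' [Ha' ->]].
  eapply Rle_trans; [apply (dpt_le d a' B b0); auto|].
  pose proof (proj2 (proj2 Hq) a' a0 b0). pose proof (HMA a' a0 Ha' Ha0).
  pose proof (ds_ge_l d a' a0). lra.
Qed.

Lemma H_ge2 {X} (d : X -> X -> R) A B b : quasi_pseudometric d ->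
  (exists a, A a) -> ds_bounded d A -> (exists b, B b) -> ds_bounded d B ->
  B b -> dset_pt d A b <= H d A B.
Proof.
  intros Hq [a0 Ha0] [MA HMA] [b0 Hb0] [MB HMB] Hb. unfold H.
  eapply Rle_trans; [|apply Rmax_r].
  apply Rsup_ub; [eauto|]. exists (d a0 b0 + MB). intros r [b' [Hb' ->]].
  eapply Rle_trans; [apply (dset_le d b' A a0); auto|].
  pose proof (proj2 (proj2 Hq) a0 b0 b'). pose proof (HMB b0 b' Hb0 Hb').
  pose proof (ds_ge_l d b0 b'). lra.
Qed.

Lemma H_le {X} (d : X -> X -> R) A B c :
  (forall a, A a -> dpt_set d a B <= c) -> (forall b, B b -> dset_pt d A b <= c) -> 0 <= c ->
  H d A B <= c.
Proof.
  intros H1 H2 H0. unfold H. apply Rmax_lub; apply Rsup_le; auto.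
  - intros r [a [Ha ->]]; auto.
  - intros r [b [Hb ->]]; auto.
Qed.

Lemma single_ne {X} (y : X) : exists a, singleton y a.
Proof. exists y; reflexivity. Qed.
Lemma single_bd {X} (d : X -> X -> R) (y : X) : quasi_pseudometric d -> ds_bounded d (singleton y).
Proof.
  intros Hq. exists 0. intros a b -> ->. apply ds_le; rewrite (proj1 (proj2 Hq)); lra.
Qed.

Lemma SE_char {X} (d : X -> X -> R) J F x : quasi_pseudometric d -> CB d (F x) ->
  startpoint d J F x -> endpoint d J F x -> forall w, F x w -> d (J x) w <= 0 /\ d w (J x) <= 0.
Proof.
  intros Hq [Hne [Hb _]] Hs He w Hw. unfold startpoint, endpoint in *. split.
  - pose proof (H_ge2 d (singleton (J x)) (F x) w Hq (single_ne _) (single_bd d _ Hq) Hne Hb Hw).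
    apply Rle_plus_epsilon. intros eps Heps.
    destruct (dset_approx d w (singleton (J x)) eps Hq (single_ne _) Heps) as [a [Ha Hd]].
    unfold singleton in Ha; subst a. lra.
  - pose proof (H_ge1 d (F x) (singleton (J x)) w Hq Hne Hb (single_ne _) (single_bd d _ Hq) Hw).
    apply Rle_plus_epsilon. intros eps Heps.
    destruct (dpt_approx d w (singleton (J x)) eps Hq (single_ne _) Heps) as [a [Ha Hd]].
    unfold singleton in Ha; subst a. lra.
Qed.

Lemma SE_dJ {X} (d : X -> X -> R) J F alpha x y : quasi_pseudometric d -> (forall x, CB d (F x)) ->
  0 < alpha < 1/2 ->
  (forall x y, H d (F x) (F y) <= alpha * (dpt_set d (J x) (F x) + dpt_set d (J y) (F y))) ->
  startpoint d J F x -> endpoint d J F x -> startpoint d J F y -> endpoint d J F y ->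
  d (J x) (J y) <= 0.
Proof.
  intros Hq HCB Ha HH Hsx Hex Hsy Hey.
  pose proof (SE_char d J F x Hq (HCB x) Hsx Hex) as Cx.
  pose proof (SE_char d J F y Hq (HCB y) Hsy Hey) as Cy.
  destruct (HCB x) as [[a Ha0] [Hbx _]]. destruct (HCB y) as [Hney [Hby _]].
  apply Rle_plus_epsilon. intros eps Heps.
  destruct (dpt_approx d a (F y) eps Hq Hney Heps) as [w [Hw Hd]].
  pose proof (H_ge1 d (F x) (F y) a Hq (ex_intro _ a Ha0) Hbx Hney Hby Ha0).
  pose proof (HH x y).
  pose proof (dpt_le d (J x) (F x) a Hq Ha0).
  pose proof (dpt_le d (J y) (F y) w Hq Hw).
  destruct (Cx a Ha0). destruct (Cy w Hw).
  pose proof (proj2 (proj2 Hq) (J x) a (J y)). pose proof (proj2 (proj2 Hq) a w (J y)).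
  assert (alpha * (dpt_set d (J x) (F x) + dpt_set d (J y) (F y)) <= 0) by nra.
  lra.
Qed.

Definition e (n : nat) : R := / (INR n + 1).
Lemma e_pos n : 0 < e n.
Proof. unfold e. apply Rinv_0_lt_compat. pose proof (pos_INR n). lra. Qed.
Lemma e_small eps : eps > 0 -> exists N, forall n, (n >= N)%nat -> e n < eps.
Proof.
  intros He. destruct (archimed_cor1 eps He) as [N [HN HN0]]. exists N. intros n Hn.
  unfold e. eapply Rlt_trans; [|exact HN].
  apply Rinv_lt_contravar.
  - apply Rmult_lt_0_compat; [apply lt_0_INR; lia | pose proof (pos_INR n); lra].
  - pose proof (le_INR _ _ Hn). lra.
Qed.

Lemma cauchy_of {X} (d : X -> X -> R) (u : nat -> X) K : K > 0 ->
  (forall n m, ds d (u n) (u m) <= K * (e n + e m)) -> ds_cauchy d u.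
Proof.
  intros HK Hu eps Heps.
  assert (Hp : eps / (2 * K) > 0) by (apply Rdiv_lt_0_compat; lra).
  destruct (e_small _ Hp) as [N HN]. exists N. intros m n Hm Hn.
  eapply Rle_lt_trans; [apply Hu|].
  pose proof (HN m Hm). pose proof (HN n Hn).
  assert (K * (e m + e n) < K * (2 * (eps / (2 * K)))) by (apply Rmult_lt_compat_l; lra).
  replace (K * (2 * (eps / (2 * K)))) with eps in H1 by (field; lra). exact H1.
Qed.

Theorem mainTheorem6 (X : Type) (d : X -> X -> R)
  (J : X -> X) (F : X -> X -> Prop) (r alpha : R) :
  inhabited X ->
  quasi_pseudometric d ->
  bicomplete d ->
  ds_continuous d J ->
  r > 0 ->
  (forall x y, r * d x y <= d (J x) (J y)) ->
  (forall x, CB d (F x)) ->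
  0 < alpha < 1/2 ->
  (forall x y, H d (F x) (F y) <=
               alpha * (dpt_set d (J x) (F x) + dpt_set d (J y) (F y))) ->
  ((exists! x0, startpoint d J F x0 /\ endpoint d J F x0) <->
   approx_mix_point d J F).
Proof.
  intros [x0] Hq [HT0 Hcomp] Hcont Hr HJ HCB Ha HH.
  destruct Hq as [Hd0 [Hdd Htri]] eqn:Eq. clear Eq.
  set (T := fun r0 => exists x, r0 = Rsup (fun s => exists y, F x y /\ s = ds d (J x) y)).
  assert (HTlb : exists m, is_lower_bound T m).
  { exists 0. intros t [x ->]. apply Rsup_ge0. destruct (HCB x) as [[y Hy] _].
    exists (ds d (J x) y). split; [eauto|]. pose proof (ds_ge_l d (J x) y). pose proof (Hd0 (J x) y). lra. }
  assert (HTne : exists t, T t) by (exists (Rsup (fun s => exists y, F x0 y /\ s = ds d (J x0) y)); exists x0; auto).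
  assert (HSub : forall x y, F x y -> ds d (J x) y <= Rsup (fun s => exists y, F x y /\ s = ds d (J x) y)).
  { intros x y Hy. apply Rsup_ub; [eauto|]. destruct (HCB x) as [[a Ha0] [[M HM] _]].
    exists (ds d (J x) a + M). intros s [y' [Hy' ->]].
    pose proof (ds_tri d (J x) a y' Hq). pose proof (HM a y' Ha0 Hy'). lra. }
  split.
  - intros [x [[Hs He] _]]. unfold approx_mix_point. fold T.
    pose proof (SE_char d J F x Hq (HCB x) Hs He) as C.
    apply Rle_antisym.
    + eapply Rle_trans; [apply Rinf_lb; [exists x; reflexivity | exact HTlb]|].
      apply Rsup_le; [|lra]. intros s [y [Hy ->]]. destruct (C y Hy). apply ds_le; auto.
    + destruct (Rinf_spec T HTne HTlb) as [_ H2]. apply H2.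
      destruct HTlb as [m Hm]. intros t Ht. destruct Ht as [x' ->]. apply Rsup_ge0.
      destruct (HCB x') as [[y Hy] _].
      exists (ds d (J x') y). split; [eauto|]. pose proof (ds_ge_l d (J x') y). pose proof (Hd0 (J x') y). lra.
  - intros Hmix. unfold approx_mix_point in Hmix. fold T in Hmix.
    assert (Hex : forall n, exists x, forall y, F x y -> ds d (J x) y <= e n).
    { intros n. destruct (Rinf_approx T (e n) HTne HTlb (e_pos n)) as [t [[x ->] Ht]].
      exists x. intros y Hy. pose proof (HSub x y Hy). lra. }
    set (xs := fun n => proj1_sig (constructive_indefinite_description _ (Hex n))).
    assert (Hxs : forall n y, F (xs n) y -> ds d (J (xs n)) y <= e n).
    { intros n. exact (proj2_sig (constructive_indefinite_description _ (Hex n))). }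
    assert (Hne : forall x, exists y, F x y) by (intros x; apply (HCB x)).
    assert (Hbd : forall x, ds_bounded d (F x)) by (intros x; apply (HCB x)).
    assert (HdJ : forall n m, d (J (xs n)) (J (xs m)) <= 3 * (e n + e m)).
    { intros n m. destruct (Hne (xs n)) as [y Hy].
      destruct (dpt_approx d y (F (xs m)) (e m) Hq (Hne _) (e_pos m)) as [w [Hw Hdw]].
      pose proof (H_ge1 d (F (xs n)) (F (xs m)) y Hq (Hne _) (Hbd _) (Hne _) (Hbd _) Hy).
      pose proof (HH (xs n) (xs m)).
      pose proof (dpt_le d (J (xs n)) (F (xs n)) y Hq Hy).
      pose proof (dpt_le d (J (xs m)) (F (xs m)) w Hq Hw).
      pose proof (dpt_ge0 d (J (xs n)) (F (xs n)) Hq (Hne _)).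
      pose proof (dpt_ge0 d (J (xs m)) (F (xs m)) Hq (Hne _)).
      pose proof (Hxs n y Hy). pose proof (Hxs m w Hw).
      pose proof (ds_ge_l d (J (xs n)) y). pose proof (ds_ge_l d (J (xs m)) w). pose proof (ds_ge_r d (J (xs m)) w).
      pose proof (Htri (J (xs n)) y (J (xs m))). pose proof (Htri y w (J (xs m))).
      pose proof (e_pos n). pose proof (e_pos m).
      assert (alpha * (dpt_set d (J (xs n)) (F (xs n)) + dpt_set d (J (xs m)) (F (xs m))) <= e n + e m) by nra.
      lra. }
    assert (Hcx : ds_cauchy d xs).
    { apply (cauchy_of d xs (3 / r)); [apply Rdiv_lt_0_compat; lra|].
      assert (Hk : forall n m, d (xs n) (xs m) <= 3 / r * (e n + e m)).
      { intros n m. apply Rmult_le_reg_l with r; [lra|].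
        replace (r * (3 / r * (e n + e m))) with (3 * (e n + e m)) by (field; lra).
        eapply Rle_trans; [apply HJ | apply HdJ]. }
      intros n m. apply ds_le; [apply Hk|rewrite Rplus_comm; apply Hk]. }
    destruct (Hcomp xs Hcx) as [z Hz].
    assert (Hg : forall eps, eps > 0 -> exists N, forall n, (n >= N)%nat -> ds d (J (xs n)) (J z) < eps).
    { intros eps Heps. destruct (Hcont z eps Heps) as [del [Hdel Hdl]].
      destruct (Hz del Hdel) as [N HN]. exists N. intros n Hn. rewrite ds_sym. apply Hdl.
      rewrite ds_sym. apply HN; auto. }
    assert (Small : forall Q, (forall n eps, eps > 0 -> Q <= ds d (J (xs n)) (J z) + 2 * e n + eps) -> Q <= 0).
    { intros Q HQ. apply Rle_plus_epsilon. intros eps Heps.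
      destruct (Hg (eps / 3)) as [N1 HN1]; [lra|].
      destruct (e_small (eps / 6)) as [N2 HN2]; [lra|].
      pose proof (HN1 (Nat.max N1 N2) (Nat.le_max_l _ _)).
      pose proof (HN2 (Nat.max N1 N2) (Nat.le_max_r _ _)).
      pose proof (HQ (Nat.max N1 N2) (eps / 3)). lra. }
    set (D := dpt_set d (J z) (F z)).
    assert (HD0 : 0 <= D) by (apply dpt_ge0; auto).
    assert (HD : D <= 0).
    { assert ((1 - alpha) * D <= 0).
      { apply Small. intros n eps Heps. destruct (Hne (xs n)) as [y Hy].
        destruct (dpt_approx d y (F z) eps Hq (Hne _) Heps) as [w [Hw Hdw]].
        pose proof (H_ge1 d (F (xs n)) (F z) y Hq (Hne _) (Hbd _) (Hne _) (Hbd _) Hy).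
        pose proof (HH (xs n) z).
        pose proof (dpt_le d (J (xs n)) (F (xs n)) y Hq Hy).
        pose proof (dpt_ge0 d (J (xs n)) (F (xs n)) Hq (Hne _)).
        pose proof (dpt_le d (J z) (F z) w Hq Hw).
        pose proof (Hxs n y Hy). pose proof (ds_ge_l d (J (xs n)) y).
        pose proof (ds_ge_r d (J (xs n)) (J z)).
        pose proof (Htri (J z) (J (xs n)) w). pose proof (Htri (J (xs n)) y w).
        pose proof (e_pos n).
        unfold D in *.
        assert (alpha * (dpt_set d (J (xs n)) (F (xs n)) + dpt_set d (J z) (F z)) <= alpha * e n + alpha * dpt_set d (J z) (F z)) by nra.
        assert (alpha * e n <= e n) by nra.
        lra. }
      nra. }
    assert (C1 : forall y, F z y -> d (J z) y <= 0).
    { intros y Hy. apply Small. intros n eps Heps.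
      destruct (dset_approx d y (F (xs n)) eps Hq (Hne _) Heps) as [w [Hw Hdw]].
      pose proof (H_ge2 d (F (xs n)) (F z) y Hq (Hne _) (Hbd _) (Hne _) (Hbd _) Hy).
      pose proof (HH (xs n) z).
      pose proof (dpt_le d (J (xs n)) (F (xs n)) w Hq Hw).
      pose proof (dpt_ge0 d (J (xs n)) (F (xs n)) Hq (Hne _)).
      pose proof (Hxs n w Hw). pose proof (ds_ge_l d (J (xs n)) w).
      pose proof (ds_ge_r d (J (xs n)) (J z)).
      pose proof (Htri (J z) (J (xs n)) w). pose proof (Htri (J z) w y).
      pose proof (e_pos n).
      unfold D in *.
      assert (alpha * (dpt_set d (J (xs n)) (F (xs n)) + dpt_set d (J z) (F z)) <= e n).
      { assert (alpha * dpt_set d (J (xs n)) (F (xs n)) <= alpha * e n) by (apply Rmult_le_compat_l; lra).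
        assert (alpha * dpt_set d (J z) (F z) <= 0) by nra. nra. }
      lra. }
    assert (C2 : forall y, F z y -> d y (J z) <= 0).
    { intros y Hy. apply Small. intros n eps Heps.
      destruct (dpt_approx d y (F (xs n)) eps Hq (Hne _) Heps) as [w [Hw Hdw]].
      pose proof (H_ge1 d (F z) (F (xs n)) y Hq (Hne _) (Hbd _) (Hne _) (Hbd _) Hy).
      pose proof (HH z (xs n)).
      pose proof (dpt_le d (J (xs n)) (F (xs n)) w Hq Hw).
      pose proof (dpt_ge0 d (J (xs n)) (F (xs n)) Hq (Hne _)).
      pose proof (Hxs n w Hw). pose proof (ds_ge_l d (J (xs n)) w). pose proof (ds_ge_r d (J (xs n)) w).
      pose proof (ds_ge_l d (J (xs n)) (J z)).
      pose proof (Htri y w (J (xs n))). pose proof (Htri y (J (xs n)) (J z)).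
      pose proof (e_pos n).
      unfold D in *.
      assert (alpha * (dpt_set d (J z) (F z) + dpt_set d (J (xs n)) (F (xs n))) <= e n).
      { assert (alpha * dpt_set d (J (xs n)) (F (xs n)) <= alpha * e n) by (apply Rmult_le_compat_l; lra).
        assert (alpha * dpt_set d (J z) (F z) <= 0) by nra. nra. }
      lra. }
    assert (Hs : startpoint d J F z).
    { unfold startpoint. apply Rle_antisym.
      - apply H_le; [| |lra].
        + intros a Haa. unfold singleton in Haa; subst a. exact HD.
        + intros b Hb. eapply Rle_trans; [apply (dset_le d b _ (J z)); auto; reflexivity|]. auto.
      - eapply Rle_trans; [|apply (H_ge1 d _ _ (J z) Hq (single_ne _) (single_bd d _ Hq) (Hne _) (Hbd _)); reflexivity].
        exact HD0. }
    assert (He : endpoint d J F z).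
    { unfold endpoint. destruct (Hne z) as [y0 Hy0]. apply Rle_antisym.
      - apply H_le; [| |lra].
        + intros a Haa. eapply Rle_trans; [apply (dpt_le d a _ (J z)); auto; reflexivity|]. auto.
        + intros b Hb. unfold singleton in Hb; subst b.
          eapply Rle_trans; [apply (dset_le d _ _ y0); auto|]. auto.
      - eapply Rle_trans; [|apply (H_ge1 d _ _ y0 Hq (Hne _) (Hbd _) (single_ne _) (single_bd d _ Hq) Hy0)].
        apply dpt_ge0; auto. apply single_ne. }
    exists z. split; [split; auto|].
    intros x' [Hs' He'].
    pose proof (SE_dJ d J F alpha z x' Hq HCB Ha HH Hs He Hs' He').
    pose proof (SE_dJ d J F alpha x' z Hq HCB Ha HH Hs' He' Hs He).
    pose proof (HJ z x'). pose proof (HJ x' z). pose proof (Hd0 z x'). pose proof (Hd0 x' z).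
    apply HT0; nra.
Qed.
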